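(* Let $\mathcal{N}$ be a nonzero Gaussian integer and let $y,z$ be real numbers with $y\ge z\ge 2$. Then $$T_1\le \sum_{\mathfrak q:\ z\le N(\mathfrak q)<y} S(\mathcal{A}_{\mathfrak q},\mathcal{P},z)+O\!\left(\frac{N(\mathcal{N})}{z}\right),$$ where $\mathfrak q$ runs over prime ideals, $\mathcal{A}_{\mathfrak q}=\{n\in\mathcal{A}:\ \mathfrak q\mid (n)\}$, and the implied constant is absolute.
   Context: $\mathbb{Z}[i]$ is the ring of Gaussian integers, $N$ the norm. $\mathcal{P}$ is the set of Gaussian primes (prime elements) not dividing $\mathcal{N}$; $\mathcal{A}=\{\mathcal{N}-p:\ p\in\mathcal{P},\ N(p)<N(\mathcal{N})\}$. For $w\ge2$, $P(w)$ is the product of the distinct prime ideals $(p)$, $p\in\mathcal{P}$, $N(p)<w$. For finite $\mathcal{B}\subset\mathbb{Z}[i]$, $S(\mathcal{B},\mathcal{P},w)=\#\{n\in\mathcal{B}:\ (n)+P(w)=\mathbb{Z}[i]\}$. $T_1=\sum_{n\in\mathcal{A},\ (n)+P(z)=\mathbb{Z}[i]}\ \sum_{\mathfrak q:\ z\le N(\mathfrak q)<y,\ \mathfrak q^k\|(n)}k$, summing over prime ideals $\mathfrak q$ dividing $(n)$ with $k$ the exact exponent. *)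

(* Defs.v *)
From HB Require Import structures.
From mathcomp Require Import all_boot all_order all_algebra.
From mathcomp Require Import boolp classical_sets fsbigop reals.
Set Implicit Arguments. Unset Strict Implicit. Unset Printing Implicit Defensive.
Import Order.TTheory GRing.Theory Num.Theory.
Local Open Scope ring_scope.
Local Open Scope classical_set_scope.

(** Gaussian integers a + b i, represented as pairs (a, b) of integers. *)
Definition gint := (int * int)%type.
Definition zi_zero : gint := (0, 0).
Definition zi_one : gint := (1, 0).
Definition zi_mul (x y : gint) : gint :=
  (x.1 * y.1 - x.2 * y.2, x.1 * y.2 + x.2 * y.1).
Definition zi_sub (x y : gint) : gint := (x.1 - y.1, x.2 - y.2).
Definition zi_exp (x : gint) (k : nat) : gint := iter k (zi_mul x) zi_one.
Definition zi_norm (x : gint) : nat := absz (x.1 ^+ 2 + x.2 ^+ 2).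

Definition zi_dvd (d n : gint) : Prop := exists k : gint, n = zi_mul d k.
Definition zi_unit (u : gint) : Prop := exists v : gint, zi_mul u v = zi_one.
Definition zi_prime (p : gint) : Prop :=
  [/\ p <> zi_zero, ~ zi_unit p &
      forall a b : gint, zi_dvd p (zi_mul a b) -> zi_dvd p a \/ zi_dvd p b].

(** Nonzero prime ideals of Z[i] = (q) with q a Gaussian prime; each has a
    unique generator in the region Re q > 0, Im q >= 0.  We index prime
    ideals by these normalized generators; N((q)) = N(q), (q) | (n) iff
    q | n, and (q)^k || (n) iff q^k | n and not q^(k+1) | n. *)
Definition prime_ideal_rep (q : gint) : Prop :=
  [/\ zi_prime q, 0 < q.1 & 0 <= q.2].

Definition calP (NN : gint) (p : gint) : Prop := zi_prime p /\ ~ zi_dvd p NN.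

Definition calA (NN : gint) : set gint :=
  [set n | exists p, [/\ calP NN p, (zi_norm p < zi_norm NN)%N & n = zi_sub NN p]].

(** (n) + P(w) = Z[i] : no prime ideal (p), p in P, N(p) < w divides (n). *)
Definition coprimeP {R : realType} (NN : gint) (w : R) (n : gint) : Prop :=
  forall p, calP NN p -> (zi_norm p)%:R < w -> ~ zi_dvd p n.

Definition Sift {R : realType} (NN : gint) (B : set gint) (w : R) : nat :=
  \sum_(n \in [set n | B n /\ coprimeP NN w n]) 1%N.

Definition calA_q (NN q : gint) : set gint := [set n | calA NN n /\ zi_dvd q n].

Definition primes_between {R : realType} (z y : R) : set gint :=
  [set q | prime_ideal_rep q /\ (z <= (zi_norm q)%:R < y)].

Definition exact_exp (q n : gint) (k : nat) : Prop :=
  zi_dvd (zi_exp q k) n /\ ~ zi_dvd (zi_exp q k.+1) n.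

Definition T1 {R : realType} (NN : gint) (y z : R) : nat :=
  \sum_(n \in [set n | calA NN n /\ coprimeP NN z n])
    \sum_(q \in primes_between z y)
      \sum_(k \in [set k : nat | exact_exp q n k]) k.

(* Main.v *)
Require Import Defs.
From HB Require Import structures.
From mathcomp Require Import all_boot all_order all_algebra.
From mathcomp Require Import boolp classical_sets fsbigop reals.
From mathcomp Require Import cardinality.
From mathcomp Require Import ring lra zify.
Import Order.TTheory GRing.Theory Num.Theory.
Local Open Scope ring_scope.
Local Open Scope classical_set_scope.

Lemma zi_mulA x y w : zi_mul x (zi_mul y w) = zi_mul (zi_mul x y) w.
Proof. case: x y w => [a b] [c d] [e f]; rewrite /zi_mul /=; congr pair; ring. Qed.
Lemma zi_mulC x y : zi_mul x y = zi_mul y x.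
Proof. case: x y => [a b] [c d]; rewrite /zi_mul /=; congr pair; ring. Qed.
Lemma zi_mul1 x : zi_mul zi_one x = x.
Proof. case: x => [a b]; rewrite /zi_mul /=; congr pair; ring. Qed.
Lemma zi_mul0 x : zi_mul x zi_zero = zi_zero.
Proof. case: x => [a b]; rewrite /zi_mul /=; congr pair; ring. Qed.
Lemma zi_mul_sub x y w : zi_mul x (zi_sub y w) = zi_sub (zi_mul x y) (zi_mul x w).
Proof. case: x y w => [a b] [c d] [e f]; rewrite /zi_mul /zi_sub /=; congr pair; ring. Qed.

Lemma zi_normM x y : zi_norm (zi_mul x y) = (zi_norm x * zi_norm y)%N.
Proof.
case: x y => [a b] [c d]; rewrite /zi_norm /zi_mul /= -abszM; congr absz; ring.
Qed.

Lemma zi_norm0 x : zi_norm x = 0%N -> x = zi_zero.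
Proof.
case: x => [a b]; rewrite /zi_norm /= => /eqP; rewrite absz_eq0 => /eqP H.
have ha : a = 0 by nia.
have hb : b = 0 by nia.
by rewrite ha hb.
Qed.

Lemma zi_norm_zero : zi_norm zi_zero = 0%N.
Proof. by []. Qed.

Lemma zi_cancel c w w' : c <> zi_zero -> zi_mul c w = zi_mul c w' -> w = w'.
Proof.
move=> c0 e.
have : zi_mul c (zi_sub w w') = zi_zero.
  rewrite zi_mul_sub e; case: (zi_mul c w') => a b; rewrite /zi_sub /=; congr pair; ring.
move=> /(congr1 zi_norm); rewrite zi_normM => /eqP; rewrite muln_eq0 => /orP[/eqP/zi_norm0//|/eqP/zi_norm0].
case: w w' {e} => [a b] [c' d]; rewrite /zi_sub /zi_zero => -[h1 h2].
by congr pair; apply/eqP; rewrite -subr_eq0; apply/eqP.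
Qed.

Lemma zi_expS q k : zi_exp q k.+1 = zi_mul q (zi_exp q k).
Proof. by []. Qed.

Lemma zi_expD q a b : zi_exp q (a + b) = zi_mul (zi_exp q a) (zi_exp q b).
Proof.
elim: a => [|a IH]; first by rewrite add0n /= zi_mul1.
by rewrite addSn !zi_expS IH zi_mulA.
Qed.

Lemma zi_norm_exp q k : zi_norm (zi_exp q k) = (zi_norm q ^ k)%N.
Proof.
elim: k => [|k IH]; first by [].
by rewrite zi_expS zi_normM IH expnS.
Qed.

Lemma zi_dvd_trans a b c : zi_dvd a b -> zi_dvd b c -> zi_dvd a c.
Proof. move=> [k ->] [l ->]; exists (zi_mul k l); by rewrite zi_mulA. Qed.

Lemma zi_dvd_exp q j k : (j <= k)%N -> zi_dvd (zi_exp q j) (zi_exp q k).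
Proof. move=> jk; exists (zi_exp q (k - j)); by rewrite -zi_expD subnKC. Qed.

Lemma zi_dvd_norm d n : n <> zi_zero -> zi_dvd d n -> (zi_norm d <= zi_norm n)%N.
Proof.
move=> n0 [k ek]; rewrite ek zi_normM.
have : zi_norm k <> 0%N.
  by move=> /zi_norm0 k0; apply: n0; rewrite ek k0 zi_mul0.
by move=> h; rewrite leq_pmulr // lt0n; apply/eqP.
Qed.

Lemma zi_norm_sub x y : (zi_norm (zi_sub x y) <= 2 * zi_norm x + 2 * zi_norm y)%N.
Proof.
case: x y => [a b] [c d]; rewrite /zi_norm /zi_sub /=.
have h1 : 0 <= a ^+ 2 + b ^+ 2 by nia.
have h2 : 0 <= c ^+ 2 + d ^+ 2 by nia.
have h3 : 0 <= (a - c) ^+ 2 + (b - d) ^+ 2 by nia.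
rewrite -lez_nat PoszD !PoszM !gez0_abs // -subr_ge0.
have -> : 2%Z * (a ^+ 2 + b ^+ 2) + 2%Z * (c ^+ 2 + d ^+ 2) - ((a - c) ^+ 2 + (b - d) ^+ 2)
  = (a + c) ^+ 2 + (b + d) ^+ 2 by ring.
by rewrite addr_ge0 // sqr_ge0.
Qed.

Section FS.
Variable R : realType.

Lemma fsum_le (T : choiceType) (P : set T) (f g : T -> R) :
  finite_set P -> (forall i, P i -> f i <= g i) ->
  \sum_(i \in P) f i <= \sum_(i \in P) g i.
Proof.
move=> Pf fg; rewrite !fsbig_finite //; rewrite big_seq [X in _ <= X]big_seq.
apply: ler_sum => i; rewrite in_fset_set // inE; exact: fg.
Qed.

Lemma fsum_sub (T : choiceType) (P Q : set T) (f : T -> R) :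
  finite_set Q -> P `<=` Q -> (forall i, Q i -> 0 <= f i) ->
  \sum_(i \in P) f i <= \sum_(i \in Q) f i.
Proof.
move=> Qf PQ f0.
have -> : P = Q `&` P by rewrite setIidr.
rewrite fsbig_mkcondr; apply: fsum_le => // i Qi.
by case: ifP => _; [| exact: f0].
Qed.

Lemma natr_fsum (T : choiceType) (P : set T) (f : T -> nat) :
  finite_set P -> ((\sum_(i \in P) (f i : nat))%:R : R) = \sum_(i \in P) ((f i)%:R : R).
Proof. by move=> Pf; rewrite !fsbig_finite // natr_sum. Qed.

Lemma fsum_exchange_nat (T : choiceType) (P : set T) (K : nat) (F : T -> nat -> R) :
  finite_set P ->
  \sum_(i \in P) \sum_(0 <= j < K) F i j = \sum_(0 <= j < K) \sum_(i \in P) F i j.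
Proof.
move=> Pf; rewrite fsbig_finite //.
under [RHS]eq_bigr do rewrite fsbig_finite //.
exact: exchange_big.
Qed.

End FS.

Lemma finite_ball (B : nat) : finite_set [set x : gint | (zi_norm x <= B)%N].
Proof.
pose f (p : nat * nat) : gint := (p.1%:Z - B%:Z, p.2%:Z - B%:Z).
apply: (@sub_finite_set _ _ (f @` (`I_(2 * B).+1 `*` `I_(2 * B).+1))); last first.
  by apply: finite_image; apply: finite_setX; apply: finite_II.
case=> a b /=; rewrite /zi_norm /= => hn.
have hn' : a ^+ 2 + b ^+ 2 <= B%:Z.
  by rewrite -lez_nat gez0_abs in hn; nia.
have ha1 : a <= B%:Z by nia.
have ha2 : - B%:Z <= a by nia.
have hb1 : b <= B%:Z by nia.
have hb2 : - B%:Z <= b by nia.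
exists (absz (a + B%:Z), absz (b + B%:Z)).
  split => /=; rewrite -ltz_nat gez0_abs; lia.
rewrite /f /= !gez0_abs; try lia.
by congr pair; ring.
Qed.

Lemma box_count (R : realType) (S : set gint) (s : nat) :
  S `<=` [set x | `|x.1| <= s%:Z /\ `|x.2| <= s%:Z] ->
  \sum_(x \in S) (1 : R) <= ((2 * s).+1 ^ 2)%:R.
Proof.
move=> Ssub.
pose f (p : nat * nat) : gint := (p.1%:Z - s%:Z, p.2%:Z - s%:Z).
pose I := `I_(2 * s).+1 `*` `I_(2 * s).+1.
have If : finite_set I by apply: finite_setX; apply: finite_II.
apply: (@le_trans _ _ (\sum_(x \in f @` I) (1 : R))).
  apply: fsum_sub => //; first exact: finite_image.
  case=> a b /Ssub [/= ha hb].
  exists (absz (a + s%:Z), absz (b + s%:Z)).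
    split => /=; rewrite -ltz_nat gez0_abs; lia.
  rewrite /f /= !gez0_abs; try lia.
  by congr pair; ring.
rewrite fsbig_image; last first.
  move=> [i j] [i' j'] _ _; rewrite /f /= => -[h1 h2].
  congr pair; apply/eqP; rewrite -eqz_nat; apply/eqP; lia.
rewrite -(@pair_fsbig _ _ _ _ _ _ _ (fun _ _ => (1:R))); try exact: finite_II.
rewrite -fsbig_ord.
have E n : \sum_(j \in `I_n) (1:R) = \sum_(j < n) (1:R) by rewrite (fsbig_ord _ _ (fun=> (1:R))).
rewrite (eq_bigr (fun _ => \sum_(j < (2 * s).+1) (1:R))); last by move=> i _; exact: E.
rewrite sumr_const card_ord sumr_const card_ord -mulrnA.
by rewrite expnS expn1.
Qed.

Lemma nat_sqrt (Y : nat) : exists s : nat, (s * s <= Y < s.+1 * s.+1)%N.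
Proof.
elim: Y => [|Y [s /andP[h1 h2]]]; first by exists 0%N.
case: (ltnP Y.+1 (s.+1 * s.+1)) => h3.
  by exists s; rewrite h3 andbT; lia.
exists s.+1; apply/andP; split; nia.
Qed.

Lemma ball_count (R : realType) (Y : nat) :
  \sum_(w \in [set w : gint | (0 < zi_norm w)%N /\ (zi_norm w <= Y)%N]) (1:R)
    <= (9 * Y)%:R.
Proof.
case: Y => [|Y].
  rewrite (_ : [set w : gint | _] = set0) ?fsbig_set0 //.
  by apply/seteqP; split => // w /= [h1 h2]; lia.
have [s /andP[h1 h2]] := nat_sqrt Y.+1.
apply: le_trans (@box_count R _ s _) _.
  case=> a b /= [_ hn].
  have hn' : a ^+ 2 + b ^+ 2 < (s.+1 * s.+1)%N%:Z.
    rewrite /zi_norm /= in hn.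
    rewrite -lez_nat gez0_abs in hn; last by nia.
    by apply: (le_lt_trans hn); rewrite ltz_nat.
  rewrite PoszM in hn'.
  split; apply/ler_normlP; split; nia.
rewrite ler_nat.
have s0 : (0 < s)%N by nia.
nia.
Qed.

Section R4.
Variable R : realType.

Lemma geom_bound (r : R) (K : nat) : 0 <= r -> r <= 2^-1 ->
  \sum_(0 <= j < K) r ^+ (j + 2) <= 2 * r ^+ 2.
Proof.
move=> r0 r2.
suff : \sum_(0 <= j < K) r ^+ (j + 2) <= 2 * r ^+ 2 - 2 * r ^+ (K + 2).
  move=> h; apply: le_trans h _; rewrite lerBlDr lerDl; rewrite mulr_ge0 // exprn_ge0 //.
elim: K => [|K IH]; first by rewrite big_geq // add0n subrr.
rewrite big_nat_recr //=.
have e : r ^+ (K.+1 + 2) = r * r ^+ (K + 2) by rewrite addSn exprS.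
rewrite e.
have p0 : 0 <= r ^+ (K + 2) by rewrite exprn_ge0.
set t := r ^+ (K + 2) in IH p0 *.
nra.
Qed.

Lemma sum_indic_le (L i : nat) (c : R) :
  \sum_(0 <= j < L) (if (j <= i)%N then c else 0) = c *+ minn L i.+1.
Proof.
elim: L => [|L IH]; first by rewrite big_geq // min0n mulr0n.
rewrite big_nat_recr //= IH.
case: (leqP L i) => h.
  have e1 : minn L i.+1 = L by lia.
  have e2 : minn L.+1 i.+1 = L.+1 by lia.
  by rewrite ?e1 ?e2 ?h mulrS addrC.
have e1 : minn L i.+1 = i.+1 by lia.
have e2 : minn L.+1 i.+1 = i.+1 by lia.
by rewrite ?e1 ?e2 ?h addr0.
Qed.

Lemma sum_indic_lt (L j : nat) (c : R) :
  \sum_(0 <= i < L) (if (i < j)%N then c else 0) = c *+ minn L j.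
Proof.
elim: L => [|L IH]; first by rewrite big_geq // min0n mulr0n.
rewrite big_nat_recr //= IH.
case: (ltnP L j) => h.
  have e1 : minn L j = L by lia.
  have e2 : minn L.+1 j = L.+1 by lia.
  by rewrite ?e1 ?e2 ?h mulrS addrC.
have e1 : minn L j = j by lia.
have e2 : minn L.+1 j = j by lia.
by rewrite ?e1 ?e2 ?h addr0.
Qed.

Definition Gn (z : R) (i j : nat) : R :=
  if z <= ((i * i + j * j)%N)%:R then ((((i * i + j * j)%N)%:R) ^+ 2)^-1 else 0.
Definition phi (z : R) (M : nat) : R :=
  if z <= ((2 * (M * M))%N)%:R then ((M%:R) ^+ 4)^-1 else 0.
Definition hh (z : R) (M : nat) : R :=
  if z <= ((2 * (M * M))%N)%:R then 2 / (M%:R ^+ 2) else 4 / z.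

Lemma Gn_phi (z : R) i j : 0 < z -> Gn z i j <= phi z (maxn i j).
Proof.
move=> z0; rewrite /Gn /phi.
case: ifP => hz; last by case: ifP => // _; rewrite invr_ge0 exprn_ge0.
have hN : (i * i + j * j <= 2 * (maxn i j * maxn i j))%N.
  by case: (leqP i j) => h; nia.
have hM : (maxn i j * maxn i j <= i * i + j * j)%N.
  by case: (leqP i j) => h; nia.
rewrite (le_trans hz) ?ler_nat //.
have Np : (0 < i * i + j * j)%N.
  rewrite lt0n; apply/negP => /eqP e; move: hz; rewrite e; lra.
have Mp : (0 < maxn i j)%N by nia.
rewrite lef_pV2 ?posrE ?exprn_gt0 ?ltr0n //.
have -> : (maxn i j)%:R ^+ 4 = ((maxn i j * maxn i j)%N%:R ^+ 2 : R).
  by rewrite natrM -expr2 -exprM.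
by rewrite ler_pXn2r ?nnegrE ?ler0n // ler_nat.
Qed.

Lemma phi_split (z : R) i j : 0 < z ->
  phi z (maxn i j) <= (if (j <= i)%N then phi z i else 0) + (if (i < j)%N then phi z j else 0).
Proof.
move=> z0; case: (leqP j i) => h.
  by rewrite addr0.
by rewrite add0r.
Qed.

Lemma phi_ge0 (z : R) M : 0 <= phi z M.
Proof. by rewrite /phi; case: ifP => // _; rewrite invr_ge0 exprn_ge0. Qed.

Lemma hh_le (z : R) M : 0 < z -> hh z M <= 4 / z.
Proof.
move=> z0; rewrite /hh; case: ifP => // hz.
have Mp : (0 < M)%N.
  rewrite lt0n; apply/negP => /eqP e; move: hz; rewrite e /=; lra.
have m0 : (0 : R) < M%:R ^+ 2 by rewrite exprn_gt0 // ltr0n.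
rewrite ler_pdivrMr // mulrAC ler_pdivlMr //.
move: hz; rewrite natrM natrM -expr2 => hz; lra.
Qed.

Lemma hh_ge0 (z : R) M : 0 < z -> 0 <= hh z M.
Proof.
move=> z0; rewrite /hh; case: ifP => _.
  by rewrite divr_ge0 // exprn_ge0.
by rewrite divr_ge0 //; lra.
Qed.

Lemma phi_tele (z : R) i : 0 < z ->
  phi z i *+ (2 * i).+1 <= 3 * (hh z i - hh z i.+1).
Proof.
move=> z0; rewrite /phi.
case: ifP => hz; last first.
  rewrite mul0rn /hh hz; have := @hh_le z i.+1 z0; rewrite /hh => h; lra.
have hz' : z <= ((2 * (i.+1 * i.+1))%N)%:R.
  by apply: le_trans hz _; rewrite ler_nat; nia.
rewrite /hh hz hz'.
have ip : (0 < i)%N.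
  rewrite lt0n; apply/negP => /eqP e; move: hz; rewrite e /=; lra.
set x : R := i%:R.
have x1 : 1 <= x by rewrite /x ler1n.
rewrite -[X in X <= _]mulr_natr.
have -> : ((2 * i).+1)%:R = 1 + 2 * x :> R by rewrite /x -natr1 natrM addrC.
have -> : (i.+1)%:R = x + 1 :> R by rewrite /x -natr1.
have xp : 0 < x by lra.
have e : 3 * (2 / x ^+ 2 - 2 / (x + 1) ^+ 2) - (x ^+ 4)^-1 * (1 + 2 * x)
   = (1 + 2 * x) * (6 * x ^+ 2 - (x + 1) ^+ 2) / (x ^+ 4 * (x + 1) ^+ 2).
  by field; apply/andP; split; lra.
rewrite -subr_ge0 e.
apply: divr_ge0; last by rewrite mulr_ge0 // exprn_ge0 //; lra.
apply: mulr_ge0; first lra.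
nra.
Qed.

Lemma sum2D_bound (z : R) (L : nat) : 0 < z ->
  \sum_(0 <= i < L) \sum_(0 <= j < L) Gn z i j <= 12 / z.
Proof.
move=> z0.
apply: le_trans (_ : \sum_(0 <= i < L) \sum_(0 <= j < L)
   ((if (j <= i)%N then phi z i else 0) + (if (i < j)%N then phi z j else 0)) <= _).
  apply: ler_sum => i _; apply: ler_sum => j _.
  exact: le_trans (@Gn_phi z i j z0) (@phi_split z i j z0).
under eq_bigr do rewrite big_split /=.
rewrite big_split /= [X in _ + X <= _]exchange_big_nat /=.
under eq_bigr do rewrite sum_indic_le.
under [X in _ + X <= _]eq_bigr do rewrite sum_indic_lt.
rewrite -big_split /=.
apply: le_trans (_ : \sum_(0 <= i < L) 3 * (hh z i - hh z i.+1) <= _).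
  apply: ler_sum => i _.
  apply: le_trans (@phi_tele z i z0).
  rewrite -mulrnDr; apply: ler_wpMn2l; first exact: phi_ge0.
  lia.
rewrite -mulr_sumr.
have -> : \sum_(0 <= i < L) (hh z i - hh z i.+1) = hh z 0 - hh z L.
  rewrite -[LHS]opprK -sumrN.
  under eq_bigr do rewrite opprB.
  by rewrite telescope_sumr // opprB.
have -> : hh z 0 = 4 / z by rewrite /hh ifF //= ; apply/negbTE; rewrite -ltNge; lra.
have := @hh_ge0 z L z0.
have : 0 < 4 / z by rewrite divr_gt0 //.
set u := 4 / z; move=> u0 h0.
rewrite /u in h0 u0 *; lra.
Qed.

End R4.

Lemma zi_mul1r x : zi_mul x zi_one = x.
Proof. by rewrite zi_mulC zi_mul1. Qed.

Lemma zi_exp1 q : zi_exp q 1 = q.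
Proof. by rewrite zi_expS /= zi_mul1r. Qed.

Lemma calA_facts NN n : calA NN n ->
  n <> zi_zero /\ (zi_norm n <= 4 * zi_norm NN)%N.
Proof.
move=> [p [[pp pndvd] hpn ->]]; split.
  move=> e; apply: pndvd; exists zi_one; rewrite zi_mul1r.
  move: e; case: NN {hpn} => a b; case: p {pp} => c d; rewrite /zi_sub /zi_zero.
  by move=> [/eqP h1 /eqP h2]; rewrite subr_eq0 in h1; rewrite subr_eq0 in h2; rewrite (eqP h1) (eqP h2).
apply: leq_trans (zi_norm_sub _ _) _; lia.
Qed.

Lemma exact_uniq q n k1 k2 : exact_exp q n k1 -> exact_exp q n k2 -> k1 = k2.
Proof.
move=> [d1 n1] [d2 n2]; case: (ltngtP k1 k2) => // h.
  by exfalso; apply: n1; apply: zi_dvd_trans d2; apply: zi_dvd_exp.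
by exfalso; apply: n2; apply: zi_dvd_trans d1; apply: zi_dvd_exp.
Qed.

Lemma zi_dvd_norm_exp q n k : n <> zi_zero -> zi_dvd (zi_exp q k) n ->
  (zi_norm q ^ k <= zi_norm n)%N.
Proof. by move=> n0 d; rewrite -zi_norm_exp; apply: zi_dvd_norm. Qed.

Section Count.
Variable R : realType.

Lemma count_mult (A : set gint) (X : nat) (d : gint) :
  (forall n, A n -> n <> zi_zero /\ (zi_norm n <= X)%N) -> (0 < zi_norm d)%N ->
  \sum_(n \in A `&` [set n | zi_dvd d n]) (1 : R) <= (9 * (X %/ zi_norm d))%:R.
Proof.
move=> hA d0.
pose W := [set w : gint | (0 < zi_norm w)%N /\ (zi_norm w <= X %/ zi_norm d)%N].
have Wf : finite_set W.
  apply: sub_finite_set (finite_ball (X %/ zi_norm d)) => w [_ h]; exact: h.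
apply: le_trans (_ : \sum_(n \in (zi_mul d) @` W) (1 : R) <= _).
  apply: fsum_sub => //; first exact: finite_image.
  move=> n [/hA [n0 nX] [w ew]]; exists w => //; split.
    rewrite lt0n; apply/negP => /eqP /zi_norm0 w0; apply: n0; by rewrite ew w0 zi_mul0.
  rewrite leq_divRL // mulnC -zi_normM -ew; exact: nX.
rewrite fsbig_image; last first.
  move=> w w' _ _; apply: zi_cancel => d0'; move: d0; rewrite d0' zi_norm_zero.
  by [].
exact: ball_count.
Qed.

End Count.

Section K.
Variable R : realType.

Lemma ind_ge0 (b : bool) : (0 : R) <= (if b then 1 else 0).
Proof. by case: b. Qed.

Lemma kset_bound q n (X : nat) : n <> zi_zero -> (zi_norm n <= X)%N ->
  (2 <= zi_norm q)%N ->
  ((\sum_(k \in [set k : nat | exact_exp q n k]) k)%:R : R) <=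
  (if n \in [set n | zi_dvd q n] then 1 else 0) +
  \sum_(0 <= j < X) (if n \in [set n | zi_dvd (zi_exp q j.+2) n] then 1 else 0).
Proof.
move=> n0 nX q2.
have S0 : 0 <= \sum_(0 <= j < X) (if n \in [set n | zi_dvd (zi_exp q j.+2) n] then 1 else 0 : R).
  by apply: sumr_ge0 => j _; apply: ind_ge0.
case: (pselect (exists v, exact_exp q n v)) => [[v hv]|nov]; last first.
  rewrite (_ : [set k : nat | exact_exp q n k] = set0); last first.
    by apply/seteqP; split => // k /= hk; apply: nov; exists k.
  rewrite fsbig_set0 /=; apply: addr_ge0 => //; exact: ind_ge0.
rewrite (_ : [set k : nat | exact_exp q n k] = [set v]); last first.
  apply/seteqP; split => k /=; last by move=> ->.
  by move=> hk; apply: exact_uniq hk hv.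
rewrite fsbig_set1.
case: v hv => [|v] hv.
  by rewrite /= addr_ge0 // ind_ge0.
have dv : zi_dvd (zi_exp q v.+1) n by case: hv.
have vX : (v < X)%N.
  have h1 := @zi_dvd_norm_exp q n v.+1 n0 dv.
  have h2 : (2 ^ v.+1 <= zi_norm q ^ v.+1)%N by rewrite leq_exp2r.
  have h3 : (v.+1 < 2 ^ v.+1)%N by rewrite ltn_expl.
  lia.
rewrite ifT; last first.
  apply: mem_set; apply: zi_dvd_trans dv; rewrite -{1}(zi_exp1 q); exact: zi_dvd_exp.
rewrite (@big_cat_nat _ _ _ v) ?(ltnW vX) //.
rewrite -natr1 [v%:R + 1]addrC lerD2l.
have -> : \sum_(0 <= i < v) (if n \in [set n | zi_dvd (zi_exp q i.+2) n] then 1 else 0 : R) = v%:R.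
  rewrite (eq_big_nat _ _ (F2 := fun=> 1)); last first.
    move=> j /andP[_ jv]; rewrite ifT //; apply: mem_set.
    by apply: zi_dvd_trans dv; apply: zi_dvd_exp.
  by rewrite sumr_const_nat subn0.
rewrite lerDl; apply: sumr_ge0 => j _; exact: ind_ge0.
Qed.

End K.

Theorem lemma3p2 :
  exists C : nat, forall (R : realType) (NN : gint) (y z : R),
    NN <> zi_zero -> 2 <= z -> z <= y ->
    ((T1 NN y z)%:R : R) <=
      (\sum_(q \in primes_between z y) Sift NN (calA_q NN q) z)%:R
      + C%:R * (zi_norm NN)%:R / z.
Proof.
exists 864%N => R NN y z NN0 z2 zy.
have z0 : 0 < z by lra.
pose N := zi_norm NN.
pose X := (4 * N)%N.
have N0 : (0 < N)%N by rewrite lt0n; apply/eqP => /zi_norm0.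
have X0 : (0 < X)%N by rewrite /X; lia.
set A' := [set n | calA NN n /\ Defs.coprimeP NN z n].
set Q := primes_between z y.
have hA' : forall n, A' n -> n <> zi_zero /\ (zi_norm n <= X)%N.
  by move=> n [hn _]; apply: calA_facts.
have A'f : finite_set A'.
  by apply: sub_finite_set (finite_ball X) => n /hA' [].
set B := (Num.truncn y).+1.
have hyB : y < B%:R by apply: truncnS_gt.
have hQ : forall q, Q q -> [/\ (2 <= zi_norm q)%N, z <= (zi_norm q)%:R,
    (zi_norm q <= B)%N, 0 < q.1 & 0 <= q.2].
  move=> q [[_ q1 q2] /andP[h1 h2]]; split => //.
  - by rewrite -(ler_nat R); apply: le_trans h1.
  - by apply/ltnW; rewrite -(ltr_nat R); apply: lt_trans hyB.
have Qf : finite_set Q.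
  by apply: sub_finite_set (finite_ball B) => q /hQ [].
pose ind1 (q n : gint) : R := if n \in [set n | zi_dvd q n] then 1 else 0.
pose indj (q : gint) (j : nat) (n : gint) : R :=
  if n \in [set n | zi_dvd (zi_exp q j.+2) n] then 1 else 0.
have step1 : ((T1 NN y z)%:R : R) <=
    \sum_(n \in A') \sum_(q \in Q) (ind1 q n + \sum_(0 <= j < X) indj q j n).
  rewrite /T1 -/A' -/Q natr_fsum //.
  apply: fsum_le => // n hn; rewrite natr_fsum //.
  apply: fsum_le => // q hq.
  have [n0 nX] := hA' n hn.
  have [q2 _ _ _ _] := hQ q hq.
  exact: kset_bound.
have step2 : \sum_(n \in A') \sum_(q \in Q) (ind1 q n + \sum_(0 <= j < X) indj q j n)
    = \sum_(q \in Q) \sum_(n \in A') ind1 q n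
      + \sum_(q \in Q) \sum_(0 <= j < X) \sum_(n \in A') indj q j n.
  rewrite (eq_fsbigr (fun n => \sum_(q \in Q) ind1 q n + \sum_(q \in Q) \sum_(0 <= j < X) indj q j n)); last first.
    by move=> n _; rewrite fsbig_split.
  rewrite fsbig_split // exchange_fsbig // [W in _ + W = _]exchange_fsbig //.
  congr (_ + _); apply: eq_fsbigr => q _; exact: fsum_exchange_nat.
have step3 : \sum_(q \in Q) \sum_(n \in A') ind1 q n
    = (\sum_(q \in Q) Sift NN (calA_q NN q) z)%:R.
  rewrite natr_fsum //; apply: eq_fsbigr => q _.
  rewrite /Sift natr_fsum; last first.
    by apply: sub_finite_set A'f => n [[hn _] hc]; split.
  rewrite (_ : [set n | calA_q NN q n /\ Defs.coprimeP NN z n] = A' `&` [set n | zi_dvd q n]).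
    by rewrite (@fsbig_mkcondr _ _ _ _ A' _ (fun=> (1:R))).
  by apply/seteqP; split => n /=; rewrite /calA_q /=; [move=> [[h1 h2] h3] | move=> [[h1 h3] h2]].
have step4 : forall q, Q q ->
    \sum_(0 <= j < X) \sum_(n \in A') indj q j n
      <= 18 * X%:R * ((zi_norm q)%:R ^+ 2)^-1.
  move=> q hq; have [q2 _ _ _ _] := hQ q hq.
  set m := zi_norm q.
  have m0 : (0 < m)%N by lia.
  set r : R := (m%:R)^-1.
  have r0 : 0 <= r by rewrite /r invr_ge0 ler0n.
  have r2 : r <= 2^-1.
    rewrite /r lef_pV2 ?posrE ?ltr0n //.
    by rewrite (ler_nat R 2 m).
  apply: le_trans (_ : \sum_(0 <= j < X) (9 * X%:R) * r ^+ (j + 2) <= _).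
    apply: ler_sum => j _.
    rewrite /indj (_ : \sum_(n \in A') _ = \sum_(n \in A' `&` [set n | zi_dvd (zi_exp q j.+2) n]) (1:R)); last first.
      by rewrite (@fsbig_mkcondr _ _ _ _ A' _ (fun=> (1:R))).
    apply: le_trans (@count_mult R A' X _ hA' _) _.
      by rewrite zi_norm_exp expn_gt0 m0.
    rewrite zi_norm_exp -/m natrM -mulrA ler_pM2l ?ltr0n //.
    rewrite /r exprVn addn2 -natrX.
    rewrite ler_pdivlMr ?ltr0n ?expn_gt0 ?m0 //.
    by rewrite -natrM ler_nat leq_trunc_div.
  rewrite -mulr_sumr.
  have -> : 18 * X%:R * (m%:R ^+ 2)^-1 = (9 * X%:R) * (2 * r ^+ 2) :> R.
    by rewrite /r exprVn; ring.
  rewrite ler_pM2l; last by rewrite mulr_gt0 // ltr0n.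
  exact: geom_bound.
pose g (q : gint) : R := if z <= (zi_norm q)%:R then ((zi_norm q)%:R ^+ 2)^-1 else 0.
have g0 : forall q, 0 <= g q.
  by move=> q; rewrite /g; case: ifP => // _; rewrite invr_ge0 exprn_ge0.
have step5 : \sum_(q \in Q) g q <= 12 / z.
  pose f (p : nat * nat) : gint := (p.1%:Z, p.2%:Z).
  pose I := `I_B.+1 `*` `I_B.+1.
  have If : finite_set I by apply: finite_setX; apply: finite_II.
  apply: le_trans (_ : \sum_(q \in f @` I) g q <= _).
    apply: fsum_sub => //; first exact: finite_image.
    case=> a b hq; have [_ _ hB h1 h2] := hQ _ hq.
    rewrite /zi_norm /= in hB; rewrite /= in h1 h2.
    have hB' : a ^+ 2 + b ^+ 2 <= B%:Z by rewrite -lez_nat gez0_abs in hB; nia.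
    exists (absz a, absz b).
      split => /=; rewrite -ltz_nat gez0_abs; nia.
    by rewrite /f /= !gez0_abs //; lia.
  rewrite fsbig_image; last first.
    move=> [i j] [i' j'] _ _; rewrite /f /= => -[h1 h2]; by rewrite h1 h2.
  rewrite -(@pair_fsbig _ _ _ _ _ _ _ (fun i j => g (f (i, j)))); try exact: finite_II.
  have E : forall i : nat, \sum_(j \in `I_B.+1) g (f (i, j)) = \sum_(0 <= j < B.+1) @Gn R z i j.
    move=> i; rewrite -(fsbig_ord _ _ (fun j => g (f (i, j)))) big_mkord.
    apply: eq_bigr => j _; rewrite /g /Gn /f /zi_norm /=.
    by [].
  have -> : \sum_(i \in `I_B.+1) \sum_(j \in `I_B.+1) g (f (i, j)) = \sum_(i \in `I_B.+1) \sum_(0 <= j < B.+1) @Gn R z i j.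
    by apply: eq_fsbigr => i _; exact: E.
  rewrite -(fsbig_ord _ _ (fun i => \sum_(0 <= j < B.+1) @Gn R z i j)).
  by have := @sum2D_bound R z B.+1 z0; rewrite big_mkord.
apply: le_trans step1 _; rewrite step2 step3 lerD2l.
apply: le_trans (_ : \sum_(q \in Q) 18 * X%:R * g q <= _).
  apply: fsum_le => // q hq; apply: le_trans (step4 q hq) _.
  by have [_ hz _ _ _] := hQ q hq; rewrite /g hz.
rewrite -mulr_fsumr.
apply: le_trans (ler_wpM2l _ step5) _.
  by rewrite mulr_ge0 // ler0n.
rewrite le_eqVlt; apply/orP; left; apply/eqP; rewrite /X /N natrM.
have zn : z != 0 by rewrite gt_eqF.
by field.
Qed.
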